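(* Let $D_{\mathrm{jnt}}$ be any distribution of $(\mathsf X,\bar{\mathsf Y},\mathsf Y)$ on $\mathcal X\times\{0,1\}\times\{0,1\}$, let $c,\bar c\in[0,1]$ and $\bar D\in\{\bar D_{\mathrm{DP}},\bar D_{\mathrm{EO}}\}$. For $\tau\ge0$ let $$V(\tau)=\inf\{\mathrm{CS}(f;D,c)\ :\ f\colon\mathcal X\to[0,1]\text{ measurable},\ \mathrm{CS}^\diamond(f;\bar D,\bar c)\ge\tau\}$$ and $F(\tau)=V(\tau)-V(0)$ (the fairness frontier). Then $F$ is convex on the set $T=\{\tau\ge0:\text{the constraint set above is nonempty}\}$.
   Context: $D$ is the law of $(\mathsf X,\mathsf Y)$, $\bar D_{\mathrm{DP}}$ the law of $(\mathsf X,\bar{\mathsf Y})$, $\bar D_{\mathrm{EO}}$ the law of $(\mathsf X,\bar{\mathsf Y})$ conditional on $\mathsf Y=1$. A randomised classifier $f\colon\mathcal X\to[0,1]$ predicts $1$ on $x$ with probability $f(x)$. For a distribution $E$ of $(\mathsf X,\mathsf Z)$ on $\mathcal X\times\{0,1\}$ with $p=\Pr(\mathsf Z=1)$: $\mathrm{FNR}(f;E)=\mathbb E_{\mathsf X\mid\mathsf Z=1}[1-f(\mathsf X)]$, $\mathrm{FPR}(f;E)=\mathbb E_{\mathsf X\mid\mathsf Z=0}[f(\mathsf X)]$, $\mathrm{CS}(f;E,c)=p(1-c)\,\mathrm{FNR}(f;E)+(1-p)c\,\mathrm{FPR}(f;E)$, and $\mathrm{CS}^\diamond(f;E,c)=\min\big(\mathrm{CS}(f;E,c),\mathrm{CS}(1-f;E,c)\big)$.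 *)

(* Defs.v *)
From HB Require Import structures.
From mathcomp Require Import all_boot all_order all_algebra.
From mathcomp Require Import all_classical all_reals all_analysis.
Set Implicit Arguments. Unset Strict Implicit. Unset Printing Implicit Defensive.
Import Order.TTheory GRing.Theory Num.Theory.
Local Open Scope classical_set_scope.
Local Open Scope ring_scope.

(* Sample space of the joint distribution D_jnt of (X, Ybar, Y):
   a point w has w.1.1 = X, w.1.2 = Ybar, w.2 = Y. *)
Section Fair.
Context {d : measure_display} {X : measurableType d} {R : realType}.
Local Notation T := ((X * bool) * bool)%type.

(* The two-variable laws (X,Z) used in the paper, each given by a conditioning
   event A on the joint space and a label Z : T -> bool.
   - D        : law of (X, Y)                       : A = setT,     Z = Y
   - Dbar_DP  : law of (X, Ybar)                    : A = setT,     Z = Ybar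
   - Dbar_EO  : law of (X, Ybar) conditional on Y=1 : A = [Y = 1],  Z = Ybar *)
Record view := View { vA : set T ; vZ : T -> bool }.

Definition D_view : view := View setT (fun w => w.2).
Definition DP_view : view := View setT (fun w => w.1.2).
Definition EO_view : view := View [set w : T | w.2 = true] (fun w => w.1.2).

Inductive fair_notion := DP | EO.
Definition Dbar_view (n : fair_notion) : view :=
  match n with DP => DP_view | EO => EO_view end.

Variable P : probability T R.

Definition pr (B : set T) : R := fine (P B).

Definition cexp (B : set T) (g : T -> R) : R :=
  fine (\int[P]_(w in B) (g w)%:E) / pr B.

Definition evZ (v : view) (b : bool) : set T := vA v `&` [set w | vZ v w = b].

Definition pZ (v : view) : R := pr (evZ v true) / pr (vA v).

Definition FNR (f : X -> R) (v : view) : R :=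
  cexp (evZ v true) (fun w => 1 - f w.1.1).
Definition FPR (f : X -> R) (v : view) : R :=
  cexp (evZ v false) (fun w => f w.1.1).

Definition CS (f : X -> R) (v : view) (c : R) : R :=
  pZ v * (1 - c) * FNR f v + (1 - pZ v) * c * FPR f v.

Definition CSd (f : X -> R) (v : view) (c : R) : R :=
  Num.min (CS f v c) (CS (fun x => 1 - f x) v c).

Definition classifier (f : X -> R) : Prop :=
  measurable_fun setT f /\ forall x, 0 <= f x <= 1.

Definition feasible (n : fair_notion) (cb tau : R) : set (X -> R) :=
  [set f | classifier f /\ tau <= CSd f (Dbar_view n) cb].

Definition Vval (n : fair_notion) (c cb tau : R) : R :=
  inf [set CS f D_view c | f in feasible n cb tau].

Definition frontier (n : fair_notion) (c cb tau : R) : R :=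
  Vval n c cb tau - Vval n c cb 0.

Definition Tset (n : fair_notion) (cb : R) : set R :=
  [set tau | 0 <= tau /\ feasible n cb tau !=set0].

End Fair.

(* Main.v *)
Require Import Defs.
From HB Require Import structures.
From mathcomp Require Import all_boot all_order all_algebra.
From mathcomp Require Import all_classical all_reals all_analysis.
From mathcomp Require Import ring lra.
Import Order.TTheory GRing.Theory Num.Theory.
Local Open Scope classical_set_scope.
Local Open Scope ring_scope.


Section H.
Context (d : measure_display) (X : measurableType d) (R : realType)
  (P : probability ((X * bool) * bool)%type R).
Local Notation T := ((X * bool) * bool)%type.

Lemma m2 (b : bool) : measurable [set w : T | w.2 = b].
Proof.
have := @measurable_snd _ _ (X * bool)%type bool.
move=> /(_ measurableT [set b]) => h. rewrite setTI in h. exact: h.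
Qed.

Lemma m12 (b : bool) : measurable [set w : T | w.1.2 = b].
Proof.
have h : measurable_fun setT (fun w : T => w.1.2) by exact: measurableT_comp.
have := h measurableT [set b] I. by rewrite setTI.
Qed.

Definition goodv (v : @view d X) := measurable (vA v) /\ forall b, measurable (evZ v b).

Lemma goodD : goodv (@D_view d X). 
Proof.
split; first exact: measurableT.
move=> b; apply: measurableI; [exact: measurableT| exact: m2].
Qed.

Lemma goodbar n : goodv (@Dbar_view d X n).
Proof.
case: n; split.
- exact: measurableT.
- move=> b; apply: measurableI; [exact: measurableT| exact: m12].
- exact: m2.
- move=> b; apply: measurableI; [exact: m2| exact: m12].
Qed.

Lemma integ {B : set T} {g : T -> R} : measurable B ->
  measurable_fun setT g -> (forall w, 0 <= g w <= 1) ->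
  P.-integrable B (EFin \o g).
Proof.
move=> mB mg hg; apply: measurable_bounded_integrable => //.
- by apply: (le_lt_trans (probability_le1 _ mB)); rewrite ltry.
- exact: measurable_funS mg.
- exists 1; split => // M M1 x _.
  have := hg x => /andP[h0 h1] /=; rewrite ger0_norm //; lra.
Qed.

Lemma cexp_lin (B : set T) (g1 g2 : T -> R) (l : R) : measurable B ->
  measurable_fun setT g1 -> (forall w, 0 <= g1 w <= 1) ->
  measurable_fun setT g2 -> (forall w, 0 <= g2 w <= 1) ->
  cexp P B (fun w => l * g1 w + (1 - l) * g2 w) = l * cexp P B g1 + (1 - l) * cexp P B g2.
Proof.
move=> mB m1 h1 m2' h2; rewrite /cexp.
have -> : fine (\int[P]_(w in B) (l * g1 w + (1 - l) * g2 w)%:E) =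
   Rintegral P B (fun w => l * g1 w + (1 - l) * g2 w) by [].
rewrite RintegralD //; last 2 first.
- have := integrableZl (mu:=P) (D:=B) mB l (integ mB m1 h1).
  by apply: eq_integrable => // x _ /=; rewrite EFinM.
- have := integrableZl (mu:=P) (D:=B) mB (1 - l) (integ mB m2' h2).
  by apply: eq_integrable => // x _ /=; rewrite EFinM.
rewrite !RintegralZl //; try exact: integ.
rewrite /Rintegral; rewrite !mulrDl !mulrA //.
Qed.


Lemma cl_mix (f1 f2 : X -> R) (l : R) : 0 <= l <= 1 ->
  classifier f1 -> classifier f2 -> classifier (fun x => l * f1 x + (1 - l) * f2 x).
Proof.
move=> hl [m1 b1] [m2' b2]; split.
  apply: measurable_realfun.measurable_funD; apply: measurable_realfun.measurable_funM => //; exact: measurable_cst.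
move=> x; have := b1 x; have := b2 x; move: hl => /andP[? ?] /andP[? ?] /andP[? ?].
apply/andP; split; nra.
Qed.

Lemma cl_neg {f : X -> R} : classifier f -> classifier (fun x => 1 - f x).
Proof.
move=> [m b]; split.
  apply: measurable_realfun.measurable_funB => //; exact: measurable_cst.
move=> x; have := b x => /andP[? ?]; apply/andP; split; lra.
Qed.

Lemma cl_meas {f : X -> R} : classifier f ->
  measurable_fun setT (fun w : T => f w.1.1).
Proof.
move=> [m _]; apply: measurableT_comp => //; exact: measurableT_comp.
Qed.

Lemma cl_b {f : X -> R} : classifier f -> forall w : T, 0 <= f w.1.1 <= 1.
Proof. by move=> [_ b] w; exact: b. Qed.

Lemma CS_mix (f1 f2 : X -> R) (l : R) (v : view) (c : R) : goodv v ->
  classifier f1 -> classifier f2 ->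
  CS P (fun x => l * f1 x + (1 - l) * f2 x) v c = l * CS P f1 v c + (1 - l) * CS P f2 v c.
Proof.
move=> gv c1 c2.
have hN : FNR P (fun x => l * f1 x + (1 - l) * f2 x) v =
    l * FNR P f1 v + (1 - l) * FNR P f2 v.
  rewrite /FNR -cexp_lin //; try exact: gv.2.
  - by congr cexp; apply: funext => w /=; ring.
  - have := cl_meas (cl_neg c1); exact.
  - move=> w; have := cl_b c1 w; move=> /andP[? ?]; apply/andP; split; lra.
  - have := cl_meas (cl_neg c2); exact.
  - move=> w; have := cl_b c2 w; move=> /andP[? ?]; apply/andP; split; lra.
have hP : FPR P (fun x => l * f1 x + (1 - l) * f2 x) v =
    l * FPR P f1 v + (1 - l) * FPR P f2 v.
  rewrite /FPR -cexp_lin //; try exact: gv.2.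
  - exact: (cl_meas c1).
  - exact: (cl_b c1).
  - exact: (cl_meas c2).
  - exact: (cl_b c2).
rewrite /CS hN hP; ring.
Qed.

Lemma pr_ge0 (B : set T) : 0 <= pr P B.
Proof. by rewrite /pr fine_ge0 // measure_ge0. Qed.

Lemma pr_le (B C : set T) : measurable B -> measurable C -> B `<=` C -> pr P B <= pr P C.
Proof.
move=> mB mC BC; rewrite /pr fine_le //; try exact: fin_num_measure.
by apply: le_measure => //; rewrite inE.
Qed.

Lemma cexp_ge0 (B : set T) g : (forall w, 0 <= g w) -> 0 <= cexp P B g.
Proof.
move=> h; rewrite /cexp divr_ge0 //; last exact: pr_ge0.
by apply: (@Rintegral_ge0 _ _ _ P B g) => x _.
Qed.

Lemma div01 (a b : R) : 0 <= a -> a <= b -> 0 <= a / b <= 1.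
Proof.
move=> a0 ab; apply/andP; split; first by rewrite divr_ge0 //; lra.
have [->|b0] := eqVneq b 0; first by rewrite invr0 mulr0.
rewrite ler_pdivrMr ?mul1r //; rewrite lt_neqAle eq_sym b0 /=; lra.
Qed.

Lemma CS_ge0 (f : X -> R) (v : view) (c : R) : goodv v -> 0 <= c <= 1 ->
  classifier f -> 0 <= CS P f v c.
Proof.
move=> gv /andP[c0 c1] cf.
have hp : 0 <= pZ P v <= 1.
  apply: div01; first exact: pr_ge0.
  apply: pr_le => //.
  - by have := gv.2 true.
  - exact: gv.1.
  - by move=> w [].
have hN : 0 <= FNR P f v by apply: cexp_ge0 => w; have := cl_b cf w; lra.
have hF : 0 <= FPR P f v by apply: cexp_ge0 => w; have := cl_b cf w; lra.
rewrite /CS; move: hp => /andP[? ?]; apply: addr_ge0; apply: mulr_ge0 => //; apply: mulr_ge0; lra.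
Qed.

Lemma CSd_mix (f1 f2 : X -> R) (l : R) (v : view) (c : R) : goodv v -> 0 <= l <= 1 ->
  classifier f1 -> classifier f2 ->
  l * CSd P f1 v c + (1 - l) * CSd P f2 v c <= CSd P (fun x => l * f1 x + (1 - l) * f2 x) v c.
Proof.
move=> gv hl c1 c2; rewrite /CSd.
rewrite (CS_mix _ _ _ _ _ gv c1 c2).
have -> : (fun x => 1 - (l * f1 x + (1 - l) * f2 x)) =
          (fun x => l * (1 - f1 x) + (1 - l) * (1 - f2 x)).
  by apply: funext => x; ring.
rewrite (CS_mix _ _ _ _ _ gv (cl_neg c1) (cl_neg c2)).
set a := CS P f1 v c; set b := CS P (fun x => 1 - f1 x) v c.
set a2 := CS P f2 v c; set b2 := CS P (fun x => 1 - f2 x) v c.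
have m1a : Num.min a b <= a by rewrite ge_min lexx.
have m1b : Num.min a b <= b by rewrite ge_min lexx orbT.
have m2a : Num.min a2 b2 <= a2 by rewrite ge_min lexx.
have m2b : Num.min a2 b2 <= b2 by rewrite ge_min lexx orbT.
move: hl => /andP[l0 l1].
rewrite le_min; apply/andP; split; nra.
Qed.
End H.

Theorem lemma4 (d : measure_display) (X : measurableType d) (R : realType)
  (P : probability ((X * bool) * bool)%type R) (c cb : R)
  (hc : 0 <= c <= 1) (hcb : 0 <= cb <= 1) (n : fair_notion)
  (t1 t2 l : R) :
  t1 \in Tset P n cb -> t2 \in Tset P n cb -> 0 <= l <= 1 ->
  l * t1 + (1 - l) * t2 \in Tset P n cb ->
  frontier P n c cb (l * t1 + (1 - l) * t2)
    <= l * frontier P n c cb t1 + (1 - l) * frontier P n c cb t2.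
Proof.
move=> h1 h2 hl hm.
have hinf : forall t, t \in Tset P n cb ->
    has_inf [set CS P f D_view c | f in feasible P n cb t].
  move=> t; rewrite inE => -[_ [f ff]]; split.
    by exists (CS P f D_view c); exists f.
  exists 0 => y [g [cg _] <-]; exact: CS_ge0 (goodD _ _) hc cg.
suff key : Vval P n c cb (l * t1 + (1 - l) * t2) <=
    l * Vval P n c cb t1 + (1 - l) * Vval P n c cb t2.
  rewrite /frontier.
  set V0 := Vval P n c cb 0; set V1 := Vval P n c cb t1; set V2 := Vval P n c cb t2.
  have -> : l * (V1 - V0) + (1 - l) * (V2 - V0) = l * V1 + (1 - l) * V2 - V0 by ring.
  by rewrite lerD2r.
apply/ler_addgt0Pr => e e0.
have [_ [f1 ff1 <-] lt1] := inf_adherent e0 (hinf _ h1).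
have [_ [f2 ff2 <-] lt2] := inf_adherent e0 (hinf _ h2).
move: ff1 ff2 => [c1 k1] [c2 k2].
have ff : feasible P n cb (l * t1 + (1 - l) * t2) (fun x => l * f1 x + (1 - l) * f2 x).
  split; first exact: cl_mix.
  apply: le_trans (@CSd_mix _ _ _ P f1 f2 l _ cb (goodbar _ _ n) hl c1 c2).
  move: hl => /andP[l0 l1]; nra.
have := ge_inf (hinf _ hm).2 (ex_intro2 _ _ _ ff erefl).
rewrite (@CS_mix _ _ _ P f1 f2 l _ c (goodD _ _) c1 c2) => hle.
rewrite /Vval; move: hl => /andP[l0 l1].
set V1 := inf _ in lt1; set V2 := inf _ in lt2.
have q1 : 0 <= l * (V1 + e - CS P f1 D_view c) by apply: mulr_ge0 => //; lra.
have q2 : 0 <= (1 - l) * (V2 + e - CS P f2 D_view c) by apply: mulr_ge0; lra.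
nra.
Qed.
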